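(* Let $X$ be a Banach space and $\alpha$ a left tensorial norm on $c_0\otimes X$. Then there exists a unique left tensorial norm $\tilde\alpha$ on $\ell_\infty\otimes X$ whose restriction to $c_0\otimes X$ (with $c_0$ regarded canonically as a subspace of $\ell_\infty$) equals $\alpha$.
   Context: A norm $\alpha$ on $Y\otimes X$ ($Y,X$ Banach spaces) is left tensorial if $\alpha(y\otimes x)=\|y\|\|x\|$ for all $y,x$ and for every bounded operator $T\colon Y\to Y$, $T\otimes I_X$ is bounded on $(Y\otimes X,\alpha)$ with $\|T\otimes I_X\|\le\|T\|$. *)

(* Defs.v *)
From HB Require Import structures.
From mathcomp Require Import all_boot all_order all_algebra.
From mathcomp Require Import all_classical all_reals all_analysis.
Set Implicit Arguments. Unset Strict Implicit. Unset Printing Implicit Defensive.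
Import Order.TTheory GRing.Theory Num.Theory.
Import numFieldNormedType.Exports.
Local Open Scope classical_set_scope.
Local Open Scope ring_scope.

Definition seqR (R : realType) := nat -> R.

Definition linf (R : realType) (y : nat -> R) : Prop :=
  exists M : R, forall n, `|y n| <= M.

Definition c0 (R : realType) (y : nat -> R) : Prop :=
  y @ \oo --> (0 : R).

Definition supnorm (R : realType) (y : nat -> R) : R :=
  sup [set `|y n| | n in [set: nat]].

Section Tensors.
Variables (R : realType) (X : normedModType R).
Variable P : (nat -> R) -> Prop. (* the subspace Y of nat -> R *)

Definition linear_on (W : lmodType R) (f : (nat -> R) -> W) : Prop :=
  forall (a : R) (y z : nat -> R), P y -> P z -> f (a *: y + z) = a *: f y + f z.

(* A finite formal sum  sum_i y_i (x) x_i  with y_i in Y. *)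
Definition pretensor := seq ((nat -> R) * X).
Fixpoint in_Y (s : pretensor) : Prop :=
  if s is p :: s' then P p.1 /\ in_Y s' else True.

(* sum_i y_i (x) x_i = 0 in the algebraic tensor product Y (x) X iff
   sum_i phi(y_i) x_i = 0 for every linear functional phi on Y. *)
Definition tzero (s : pretensor) : Prop :=
  forall phi : (nat -> R) -> R^o, linear_on phi ->
    \sum_(p <- s) phi p.1 *: p.2 = 0.

Definition topp (s : pretensor) : pretensor := map (fun p => (- p.1, p.2)) s.
Definition tscale (c : R) (s : pretensor) : pretensor :=
  map (fun p => (c *: p.1, p.2)) s.
Definition tmap (T : (nat -> R) -> (nat -> R)) (s : pretensor) : pretensor :=
  map (fun p => (T p.1, p.2)) s.

Definition teq (s t : pretensor) : Prop := tzero (s ++ topp t).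

(* alpha is a norm on the algebraic tensor product Y (x) X (given on
   representatives; values on sequences not in Y are irrelevant) *)
Definition tensor_norm (alpha : pretensor -> R) : Prop :=
  [/\ (forall s t, in_Y s -> in_Y t -> teq s t -> alpha s = alpha t),
      (forall s, in_Y s -> (alpha s = 0 <-> tzero s)),
      (forall s t, in_Y s -> in_Y t -> alpha (s ++ t) <= alpha s + alpha t) &
      (forall c s, in_Y s -> alpha (tscale c s) = `|c| * alpha s)].

Definition left_tensorial (nY : (nat -> R) -> R) (alpha : pretensor -> R) : Prop :=
  [/\ tensor_norm alpha,
      (forall y x, P y -> alpha [:: (y, x)] = nY y * `|x|) &
      (forall (T : (nat -> R) -> (nat -> R)) (C : R),
          (forall y, P y -> P (T y)) -> linear_on T ->
          (forall y, P y -> nY (T y) <= C * nY y) ->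
          forall s, in_Y s -> alpha (tmap T s) <= C * alpha s)].
End Tensors.

(* Main.v *)
Require Import Defs.
From mathcomp Require Import all_boot all_order all_algebra.
From mathcomp Require Import all_classical all_reals all_analysis.
From mathcomp Require Import lra ring.
Import Order.TTheory GRing.Theory Num.Theory.
Import numFieldNormedType.Exports.
Set Implicit Arguments. Unset Strict Implicit. Unset Printing Implicit Defensive.
Local Open Scope classical_set_scope.
Local Open Scope ring_scope.

Section Gen.
Variables (R : realType) (X : normedModType R).
Local Notation T := (@pretensor R X).
Implicit Types (s t : T) (P : (nat -> R) -> Prop) (y z : nat -> R).

Definition closedP P := P 0 /\ forall a y z, P y -> P z -> P (a *: y + z).

Lemma closedD P : closedP P -> forall y z, P y -> P z -> P (y + z).
Proof. by move=> [_ H] y z Py Pz; have := H 1 y z Py Pz; rewrite scale1r. Qed.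
Lemma closedZ P : closedP P -> forall a y, P y -> P (a *: y).
Proof. by move=> [H0 H] a y Py; have := H a y 0 Py H0; rewrite addr0. Qed.
Lemma closedN P : closedP P -> forall y, P y -> P (- y).
Proof. by move=> CP y Py; have := closedZ CP (-1) Py; rewrite scaleN1r. Qed.
Lemma closedB P : closedP P -> forall y z, P y -> P z -> P (y - z).
Proof. by move=> CP y z Py Pz; apply: closedD => //; apply: closedN. Qed.

Section Lin.
Variables (P : (nat -> R) -> Prop) (W : lmodType R) (phi : (nat -> R) -> W).
Hypothesis CP : closedP P.
Hypothesis Lphi : linear_on P phi.
Lemma phi0 : phi 0 = 0.
Proof.
have := Lphi 1 (CP.1) (CP.1); rewrite scale1r addr0 scale1r => H.
by apply: (addrI (phi 0)); rewrite addr0 -H.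
Qed.
Lemma phiD y z : P y -> P z -> phi (y + z) = phi y + phi z.
Proof. by move=> Py Pz; have := Lphi 1 Py Pz; rewrite !scale1r. Qed.
Lemma phiZ a y : P y -> phi (a *: y) = a *: phi y.
Proof. by move=> Py; have := Lphi a Py CP.1; rewrite !addr0 phi0 addr0. Qed.
Lemma phiN y : P y -> phi (- y) = - phi y.
Proof. by move=> Py; rewrite -(scaleN1r y) phiZ // scaleN1r. Qed.
Lemma phiB y z : P y -> P z -> phi (y - z) = phi y - phi z.
Proof. by move=> Py Pz; rewrite phiD ?phiN //; exact: closedN. Qed.
End Lin.

Lemma in_Y_cat P s t : in_Y P (s ++ t) <-> in_Y P s /\ in_Y P t.
Proof.
elim: s => [|p s IH] /=; first by split => // [[]].
by rewrite IH; split => [[? [? ?]]|[[? ?] ?]].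
Qed.

Lemma in_Y_map P Q (f : (nat -> R) * X -> (nat -> R) * X) s :
  (forall p, P p.1 -> Q (f p).1) -> in_Y P s -> in_Y Q (map f s).
Proof. by move=> H; elim: s => [|p s IH] //= [Hp Hs]; split; [apply: H|apply: IH]. Qed.

Lemma in_Y_tmap P Q U s : (forall y, P y -> Q (U y)) -> in_Y P s -> in_Y Q (tmap U s).
Proof. by move=> H; apply: in_Y_map => p /H. Qed.

Lemma in_Y_sub P Q s : (forall y, P y -> Q y) -> in_Y P s -> in_Y Q s.
Proof. by move=> H; elim: s => [|p s IH] //= [Hp Hs]; split; [apply: H|apply: IH]. Qed.

Lemma in_Y_memP P s : in_Y P s <-> forall y, y \in map fst s -> P y.
Proof.
elim: s => [|p s IH] /=; first by split => // _ y; rewrite in_nil.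
rewrite IH; split.
  by move=> [Hp Hs] y; rewrite inE => /orP[/eqP ->|/Hs].
by move=> H; split; [apply: H; rewrite mem_head|move=> y yin; apply: H; rewrite inE yin orbT].
Qed.

Lemma in_Y_and P Q s : in_Y P s -> in_Y Q s -> in_Y (fun y => P y /\ Q y) s.
Proof. by elim: s => [|p s IH] //= [? ?] [? ?]; split => //; apply: IH. Qed.

Lemma tmap_cat U s t : tmap U (s ++ t) = tmap U s ++ tmap U t.
Proof. exact: map_cat. Qed.

Lemma map_in P (f g : (nat -> R) * X -> (nat -> R) * X) s :
  in_Y P s -> (forall p, P p.1 -> f p = g p) -> map f s = map g s.
Proof.
move=> + H; elim: s => [|p s IH] //= [Hp Hs].
by rewrite H // IH.
Qed.

Lemma sum_in (V : nmodType) P (F G : (nat -> R) * X -> V) s :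
  in_Y P s -> (forall p, P p.1 -> F p = G p) ->
  \sum_(p <- s) F p = \sum_(p <- s) G p.
Proof.
move=> + H; elim: s => [|p s IH] /=; first by rewrite !big_nil.
by move=> [Hp Hs]; rewrite !big_cons H // IH.
Qed.

Lemma sumD2 (V : nmodType) (F G : (nat -> R) * X -> V) (s : T) :
  \sum_(p <- s) F p + \sum_(p <- s) G p = \sum_(p <- s) (F p + G p).
Proof. by rewrite big_split. Qed.

Lemma sum_le_in P (F G : (nat -> R) * X -> R) s :
  in_Y P s -> (forall p, P p.1 -> F p <= G p) ->
  \sum_(p <- s) F p <= \sum_(p <- s) G p.
Proof.
move=> + H; elim: s => [|p s IH] /=; first by rewrite !big_nil.
by move=> [Hp Hs]; rewrite !big_cons lerD // ?H // IH.
Qed.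

Lemma sum_lin (F G : (nat -> R) * X -> R) (K : R) s :
  \sum_(p <- s) (F p - G p * K) *: p.2 =
  \sum_(p <- s) F p *: p.2 - K *: \sum_(p <- s) G p *: p.2.
Proof.
rewrite scaler_sumr -sumrB; apply: eq_bigr => p _.
by rewrite scalerBl scalerA mulrC.
Qed.

Lemma tzero_coord P s : closedP P -> in_Y P s ->
  (forall k, \sum_(p <- s) p.1 k *: p.2 = 0) -> tzero P s.
Proof.
move=> CP; move: {2}(size s) (leqnn (size s)) => n.
elim: n s => [|n IHn] [|[y x] s] //=.
- by move=> _ _ _ phi _; rewrite big_nil.
- by move=> _ _ _ phi _; rewrite big_nil.
rewrite ltnS => Hsz [Py Hs] H phi Lphi; rewrite big_cons /=.
have IH : forall s0, size s0 = size s -> in_Y P s0 ->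
    (forall k, \sum_(p <- s0) p.1 k *: p.2 = 0) -> tzero P s0.
  by move=> s0 e; apply: IHn; rewrite e.
case: (pselect (exists k, y k != 0)) => [[k0 Hk0]|Hn].
  pose c := fun p : (nat -> R) * X => p.1 k0 / y k0.
  pose s' := map (fun p => (p.1 - c p *: y, p.2)) s.
  have Hs' : in_Y P s'.
    apply: in_Y_map Hs => p Pp /=; apply: closedB => //; exact: closedZ.
  have Hk0s : \sum_(p <- s) p.1 k0 *: p.2 = - (y k0 *: x).
    by apply/eqP; rewrite -addr_eq0 addrC; apply/eqP; have := H k0; rewrite big_cons.
  have Z := IH s' (size_map _ _) Hs' _ phi Lphi.
  have Z' : \sum_(p <- s') phi p.1 *: p.2 = 0.
    apply: Z => k; rewrite big_map /=.
    rewrite (eq_bigr (fun p => (p.1 k - p.1 k0 * (y k / y k0)) *: p.2)); last first.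
      by move=> p _; congr (_ *: _); rewrite /c /=; congr (_ - _); rewrite mulrA mulrAC.
    rewrite sum_lin Hk0s.
    have := H k; rewrite big_cons /= => /eqP; rewrite addrC addr_eq0 => /eqP ->.
    rewrite scalerN opprK scalerA -mulrA mulVf // mulr1.
    by rewrite addrC subrr.
  move: Z'; rewrite big_map /=.
  rewrite (sum_in (G := fun p => (phi p.1 - p.1 k0 * (phi y / y k0)) *: p.2) Hs); last first.
    move=> p Pp /=; rewrite (phiB CP Lphi) // ?(phiZ CP Lphi) //; last exact: closedZ.
    by rewrite /c /GRing.scale /= mulrA mulrAC.
  rewrite sum_lin Hk0s scalerN opprK scalerA -mulrA mulVf // mulr1.
  by rewrite addrC.
have y0 : y = 0.
  apply/funext => k; apply/eqP; apply: contra_notT Hn => ?; by exists k.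
rewrite y0 (phi0 CP Lphi) scale0r add0r.
apply: IH => // k0; have := H k0; rewrite big_cons y0 /= scale0r add0r //.
Qed.

Section TN.
Variables (P : (nat -> R) -> Prop) (nY : (nat -> R) -> R) (alpha : T -> R).
Hypothesis CP : closedP P.
Hypothesis TN : tensor_norm P alpha.
Hypothesis SG : forall y x, P y -> alpha [:: (y, x)] = nY y * `|x|.

Lemma tzero_nil : tzero P ([::] : T).
Proof. by move=> phi _; rewrite big_nil. Qed.

Lemma alpha_nil : alpha [::] = 0.
Proof. by case: TN => _ H _ _; apply/(H [::]) => //; exact: tzero_nil. Qed.

Lemma alpha_teq s t : in_Y P s -> in_Y P t -> teq P s t -> alpha s = alpha t.
Proof. by case: TN => H _ _ _; apply: H. Qed.

Lemma alpha_ge0 s : in_Y P s -> 0 <= alpha s.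
Proof.
move=> Hs; case: TN => _ Hz Htr Hsc.
have Ht : in_Y P (tscale (-1) s).
  by apply: in_Y_map Hs => p /= Pp; exact: closedZ.
have Z : alpha (s ++ tscale (-1) s) = 0.
  apply/Hz; first by apply/in_Y_cat.
  move=> phi Lphi; rewrite big_cat big_map /= sumD2.
  rewrite (sum_in (G := fun _ => 0) Hs) ?big1 // => p Pp.
  by rewrite (phiZ CP Lphi) // scaleN1r scaleNr subrr.
have := Htr _ _ Hs Ht; rewrite Z Hsc // normrN normr1 mul1r.
move=> h; lra.
Qed.

Lemma alpha_list s : in_Y P s -> alpha s <= \sum_(p <- s) nY p.1 * `|p.2|.
Proof.
elim: s => [|[y x] s IH] /=; first by rewrite alpha_nil big_nil.
move=> [Py Hs]; rewrite big_cons /=.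
case: TN => _ _ Htr _.
have := Htr [:: (y, x)] s (conj Py I) Hs; rewrite /= SG // => h.
by apply: (le_trans h); rewrite lerD2l; apply: IH.
Qed.

Lemma alpha_approx (U : (nat -> R) -> (nat -> R)) (e : R) s :
  (forall y, P y -> P (U y)) ->
  in_Y (fun y => P y /\ nY (y - U y) <= e) s ->
  alpha s <= alpha (tmap U s) + e * \sum_(p <- s) `|p.2|.
Proof.
move=> PU Hse.
have Hs : in_Y P s by apply: in_Y_sub Hse => y [].
pose D := map (fun p => (p.1 - U p.1, p.2)) s.
have HU : in_Y P (tmap U s) by apply: in_Y_tmap Hs.
have HD : in_Y P D.
  by apply: in_Y_map Hs => p Pp /=; apply: closedB => //; apply: PU.
have HUD : in_Y P (tmap U s ++ D) by apply/in_Y_cat.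
rewrite (alpha_teq Hs HUD); last first.
  move=> phi Lphi; rewrite /topp map_cat !big_cat !big_map /=.
  rewrite !sumD2.
  rewrite (sum_in (G := fun _ => 0) Hs) ?big1 // => p Pp /=.
  have PUp := PU _ Pp.
  rewrite (phiN CP Lphi) // (phiN CP Lphi) ?(phiB CP Lphi) //; last exact: closedB.
  by rewrite -!scalerDl opprB addKr subrr scale0r.
case: TN => _ _ Htr _.
apply: (le_trans (Htr _ _ HU HD)); rewrite lerD2l.
apply: (le_trans (alpha_list HD)); rewrite big_map /= mulr_sumr.
apply: (sum_le_in Hse) => p [Pp Hp]; apply: ler_wpM2r => //.
Qed.

End TN.

Lemma c0_closed : closedP (@c0 R).
Proof.
split; first exact: cvg_cst.
move=> a y z Hy Hz; rewrite /c0.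
have := cvgD (cvgZr (k:=a) Hy) Hz; rewrite scaler0 addr0 => h; exact: h.
Qed.

Lemma linf_closed : closedP (@linf R).
Proof.
split; first by exists 0 => n; rewrite normr0.
move=> a y z [M HM] [N HN]; exists (`|a| * M + N) => n /=.
apply: (le_trans (ler_normD _ _)); apply: lerD => //.
by rewrite normrM ler_wpM2l.
Qed.

Lemma c0_linf y : c0 y -> linf y.
Proof.
move=> H; have := cvgr0_norm_le _ H (1:R) ltr01; case=> N _ HN.
exists (1 + \sum_(k < N) `|y k|) => n.
case: (leqP N n) => Hn.
  by apply: (le_trans (HN n Hn)); rewrite lerDl sumr_ge0.
apply: (le_trans _ (ler_wpDl ler01 (le_refl _))).
rewrite (bigD1 (Ordinal Hn)) //= lerDl sumr_ge0 //.
Qed.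

Lemma sn_ub y k : linf y -> `|y k| <= supnorm y.
Proof.
move=> [M HM]; apply: ub_le_sup; last by exists k.
by exists M => _ [n _ <-].
Qed.

Lemma sn_le y B : (forall k, `|y k| <= B) -> supnorm y <= B.
Proof.
move=> H; apply: ge_sup; first by exists `|y 0%N|, 0%N.
by move=> _ [n _ <-].
Qed.

Lemma sn_ge0 y : linf y -> 0 <= supnorm y.
Proof. by move=> Hy; apply: le_trans (sn_ub 0 Hy). Qed.

Definition PT (n : nat) (y : nat -> R) : nat -> R :=
  fun k => if (k < n)%N then y k else 0.

Lemma PT_c0 n y : c0 (PT n y).
Proof.
apply/cvgr0Pnorm_le => e e0; exists n => // k /= Hk.
by rewrite /PT ltnNge Hk normr0 ltW.
Qed.

Lemma PT_lin (Q : (nat -> R) -> Prop) n : linear_on Q (PT n).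
Proof.
move=> a y z _ _; apply/funext => k.
change (PT n (a *: y + z) k = a * PT n y k + PT n z k).
by rewrite /PT; case: ifP => _ //=; rewrite mulr0 addr0.
Qed.

Lemma PT_norm n y : linf y -> supnorm (PT n y) <= supnorm y.
Proof.
move=> Hy; apply: sn_le => k; rewrite /PT; case: ifP => _.
  exact: sn_ub.
by rewrite normr0 sn_ge0.
Qed.

Lemma eval_lin (Q : (nat -> R) -> Prop) k : linear_on Q (fun y : nat -> R => (y k : R^o)).
Proof. by []. Qed.

Lemma c0_tail y e : c0 y -> 0 < e -> exists N, forall M, (N <= M)%N ->
  supnorm (y - PT M y) <= e.
Proof.
move=> H e0; have := cvgr0_norm_le _ H e e0; case=> N _ HN.
exists N => M HM; apply: sn_le => k.
change (`|y k - PT M y k| <= e); rewrite /PT.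
case: ifP => Hk; first by rewrite subrr normr0 ltW.
rewrite subr0; apply: HN; apply: leq_trans HM _; by rewrite leqNgt Hk.
Qed.

Lemma same_trunc (a b : R) : 0 <= a -> 0 <= b ->
  Num.trunc a = Num.trunc b -> `|a - b| < 1.
Proof.
move=> a0 b0 e; have /andP[la ua] := truncn_itv a0; have /andP[lb ub] := truncn_itv b0.
rewrite e in la ua; move: la ua lb ub; set t : R := (Num.trunc b)%:R.
rewrite -natr1 -/t => la ua lb ub.
rewrite ltr_norml; apply/andP; split; lra.
Qed.

Lemma net (ys : seq (nat -> R)) (d : R) : 0 < d ->
  (forall y, y \in ys -> linf y) ->
  forall A : nat -> Prop, exists F : seq nat, (forall f, f \in F -> A f) /\
   forall n, A n -> exists f, f \in F /\ all (fun y => `|y n - y f| <= d) ys.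
Proof.
move=> d0; elim: ys => [|y ys IH] Hys A.
  case: (pselect (exists n, A n)) => [[n0 An0]|N].
    exists [:: n0]; split; first by move=> f; rewrite inE => /eqP ->.
    by move=> n _; exists n0; rewrite inE eqxx.
  by exists [::]; split => // n An; exfalso; apply: N; exists n.
have [M HM] := Hys y (mem_head _ _).
have Hys' : forall y, y \in ys -> linf y.
  by move=> z zin; apply: Hys; rewrite inE zin orbT.
pose cell n := Num.trunc ((y n + M) / d).
have pos n : 0 <= (y n + M) / d.
  apply: divr_ge0; last exact: ltW.
  by have := HM n; rewrite ler_norml => /andP[h _]; lra.
have close n f : cell n = cell f -> `|y n - y f| <= d.
  move=> e; have := same_trunc (pos n) (pos f) e.
  rewrite -mulrBl (_ : y n + M - (y f + M) = y n - y f); last by ring.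
  rewrite normrM normfV (gtr0_norm d0) ltr_pdivrMr // mul1r => h; exact: ltW.
have main : forall K, exists F : seq nat, (forall f, f \in F -> A f) /\
   forall n, A n -> (cell n < K)%N ->
     exists f, f \in F /\ all (fun y => `|y n - y f| <= d) (y :: ys).
  elim => [|K [F1 [F1A HF1]]].
    by exists [::]; split.
  have [F2 [F2A HF2]] := IH Hys' (fun n => A n /\ cell n = K).
  exists (F1 ++ F2); split.
    by move=> f; rewrite mem_cat => /orP[/F1A|/F2A []].
  move=> n An; rewrite ltnS leq_eqVlt => /orP[/eqP cK|cK]; last first.
    by have [f [fin Hf]] := HF1 n An cK; exists f; rewrite mem_cat fin.
  have [f [fin Hf]] := HF2 n (conj An cK).
  exists f; rewrite mem_cat fin orbT; split => //=.
  rewrite Hf andbT; apply: close; rewrite cK.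
  by have [_ ->] := F2A f fin.
have [F [FA HF]] := main (Num.trunc ((M + M) / d)).+1.
exists F; split => // n An; apply: HF => //.
rewrite ltnS; apply: le_truncn; rewrite ler_pM2r ?invr_gt0 //.
rewrite lerD2r; have := HM n; rewrite ler_norml => /andP[_ h]; exact: h.
Qed.

Section Beta.
Variable alpha : T -> R.
Hypothesis LA : left_tensorial (@c0 R) (@supnorm R) alpha.

Let TNa : tensor_norm (@c0 R) alpha. Proof. by case: LA. Qed.
Let SGa : forall y (x : X), c0 y -> alpha [:: (y, x)] = supnorm y * `|x|.
Proof. by case: LA. Qed.
Let LTa := let: And3 _ _ h := LA in h.

Definition Adm (S : (nat -> R) -> (nat -> R)) :=
  [/\ linear_on (@linf R) S, forall y, linf y -> c0 (S y) &
      forall y, linf y -> supnorm (S y) <= supnorm y].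

Definition beta (s : T) : R := sup [set alpha (tmap S s) | S in Adm].

Lemma Adm_PT n : Adm (PT n).
Proof.
split; [exact: PT_lin | move=> y _; exact: PT_c0 | move=> y Hy; exact: PT_norm].
Qed.

Lemma inY_Adm S s : Adm S -> in_Y (@linf R) s -> in_Y (@c0 R) (tmap S s).
Proof. by case=> _ H _; apply: in_Y_tmap. Qed.

Lemma alpha_Adm S s : Adm S -> in_Y (@c0 R) s -> alpha (tmap S s) <= alpha s.
Proof.
case=> L Hc Hn Hs; rewrite -[leRHS]mul1r; apply: LTa => //.
- by move=> y /c0_linf /Hc.
- by move=> a y z /c0_linf Hy /c0_linf Hz; apply: L.
- by move=> y /c0_linf Hy; rewrite mul1r; apply: Hn.
Qed.

Lemma E_ub s : in_Y (@linf R) s ->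
  ubound [set alpha (tmap S s) | S in Adm] (\sum_(p <- s) supnorm p.1 * `|p.2|).
Proof.
move=> Hs _ [S AS <-].
apply: (le_trans (alpha_list TNa SGa (inY_Adm AS Hs))).
rewrite big_map /=; apply: (sum_le_in Hs) => p Pp.
by apply: ler_wpM2r => //; case: AS => _ _; apply.
Qed.

Lemma beta_ge S s : Adm S -> in_Y (@linf R) s -> alpha (tmap S s) <= beta s.
Proof.
move=> AS Hs; apply: ub_le_sup; last by exists S.
by exists (\sum_(p <- s) supnorm p.1 * `|p.2|); apply: E_ub.
Qed.

Lemma beta_le s B : (forall S, Adm S -> alpha (tmap S s) <= B) -> beta s <= B.
Proof.
move=> H; apply: ge_sup; first by exists (alpha (tmap (PT 0) s)), (PT 0) => //; exact: Adm_PT.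
by move=> _ [S AS <-]; apply: H.
Qed.

Lemma beta_ge0 s : in_Y (@linf R) s -> 0 <= beta s.
Proof.
move=> Hs; apply: le_trans (beta_ge (Adm_PT 0) Hs).
apply: (alpha_ge0 c0_closed TNa); exact: inY_Adm (Adm_PT 0) Hs.
Qed.

Lemma teq_transport S s t : Adm S -> in_Y (@linf R) s -> in_Y (@linf R) t ->
  teq (@linf R) s t -> teq (@c0 R) (tmap S s) (tmap S t).
Proof.
move=> [LS HSc HSn] Hs Ht H phi Lphi.
have Lpsi : linear_on (@linf R) (fun y => phi (S y)).
  move=> a y z Hy Hz /=; rewrite LS //; apply: Lphi; exact: HSc.
have h := H _ Lpsi; rewrite /topp !big_cat !big_map /= in h *; rewrite -[RHS]h.
congr (_ + _); apply: (sum_in Ht) => p Pp /=.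
rewrite (phiN linf_closed LS) // (phiN c0_closed Lphi) //; exact: HSc.
Qed.

Lemma tzero_transport S s : Adm S -> in_Y (@linf R) s ->
  tzero (@linf R) s -> tzero (@c0 R) (tmap S s).
Proof.
move=> AS Hs H.
have := @teq_transport S s [::] AS Hs I; rewrite /teq /= !cats0; exact.
Qed.



Lemma beta_teq s t : in_Y (@linf R) s -> in_Y (@linf R) t ->
  teq (@linf R) s t -> beta s = beta t.
Proof.
move=> Hs Ht H; rewrite /beta; congr sup.
have e S : Adm S -> alpha (tmap S s) = alpha (tmap S t).
  move=> AS; apply: (alpha_teq TNa (inY_Adm AS Hs) (inY_Adm AS Ht)).
  exact: teq_transport.
apply/seteqP; split => _ [S AS <-]; exists S => //; by rewrite e.
Qed.

Lemma beta_zero s : in_Y (@linf R) s -> (beta s = 0 <-> tzero (@linf R) s).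
Proof.
move=> Hs; case: TNa => _ Hz _ _; split => [H|H].
  apply: (tzero_coord linf_closed Hs) => k.
  have AS := Adm_PT k.+1.
  have A0 : alpha (tmap (PT k.+1) s) = 0.
    apply: le_anti; rewrite (alpha_ge0 c0_closed TNa (inY_Adm AS Hs)) andbT.
    by rewrite -H; apply: beta_ge.
  have /(Hz _ (inY_Adm AS Hs)) Z := A0.
  have := Z _ (@eval_lin (@c0 R) k); rewrite big_map /=.
  by rewrite /PT ltnSn.
apply: le_anti; rewrite beta_ge0 // andbT.
apply: beta_le => S AS; rewrite le_eqVlt; apply/orP; left; apply/eqP.
by apply/(Hz _ (inY_Adm AS Hs)); apply: tzero_transport.
Qed.

Lemma beta_tri s t : in_Y (@linf R) s -> in_Y (@linf R) t ->
  beta (s ++ t) <= beta s + beta t.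
Proof.
move=> Hs Ht; case: TNa => _ _ Htr _; apply: beta_le => S AS.
rewrite tmap_cat; apply: (le_trans (Htr _ _ (inY_Adm AS Hs) (inY_Adm AS Ht))).
by apply: lerD; apply: beta_ge.
Qed.

Lemma beta_scale c s : in_Y (@linf R) s -> beta (tscale c s) = `|c| * beta s.
Proof.
move=> Hs; case: TNa => _ _ _ Hsc.
have Hcs : in_Y (@linf R) (tscale c s).
  by apply: in_Y_map Hs => p Pp /=; apply: closedZ linf_closed _ _ _.
have key S : Adm S -> tmap S (tscale c s) = tscale c (tmap S s).
  move=> [LS _ _]; rewrite /tmap /tscale -!map_comp; apply: (map_in Hs) => p Pp /=.
  by rewrite (phiZ linf_closed LS).
apply: le_anti; apply/andP; split.
  apply: beta_le => S AS; rewrite key // Hsc; last exact: inY_Adm.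
  by apply: ler_wpM2l => //; apply: beta_ge.
have [c0E|cn0] := eqVneq c 0.
  rewrite c0E normr0 mul0r; apply: beta_ge0; by rewrite -c0E.
have cp : 0 < `|c| by rewrite normr_gt0.
rewrite mulrC -ler_pdivlMr //; apply: beta_le => S AS.
rewrite ler_pdivlMr // mulrC -Hsc; last exact: inY_Adm.
by rewrite -key //; apply: beta_ge.
Qed.

Lemma beta_single y (x : X) : linf y -> beta [:: (y, x)] = supnorm y * `|x|.
Proof.
move=> Hy; apply: le_anti; apply/andP; split.
  apply: beta_le => S [LS HSc HSn]; rewrite /= SGa; last exact: HSc.
  by apply: ler_wpM2r => //; apply: HSn.
have [->|xn0] := eqVneq x 0; first by rewrite normr0 mulr0 beta_ge0.
have xp : 0 < `|x| by rewrite normr_gt0.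
rewrite -ler_pdivlMr //; apply: sn_le => k.
have -> : y k = PT k.+1 y k by rewrite /PT ltnSn.
apply: (le_trans (sn_ub _ (c0_linf (PT_c0 _ _)))).
rewrite ler_pdivlMr // -SGa; last exact: PT_c0.
have := beta_ge (Adm_PT k.+1) (s := [:: (y, x)]) (conj Hy I); exact.
Qed.



Lemma small_eps (e K : R) : 0 < e -> 0 <= K -> e / (K + 1) * K <= e.
Proof.
move=> e0 K0; have K1 : 0 < K + 1 by lra.
rewrite mulrAC ler_pdivrMr //; rewrite ler_pM2l //; lra.
Qed.

Lemma beta_LT (Tt : (nat -> R) -> (nat -> R)) (C : R) :
  (forall y, linf y -> linf (Tt y)) -> linear_on (@linf R) Tt ->
  (forall y, linf y -> supnorm (Tt y) <= C * supnorm y) ->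
  forall s, in_Y (@linf R) s -> beta (tmap Tt s) <= C * beta s.
Proof.
move=> HT LT HN s Hs.
pose y1 := fun _ : nat => (1 : R).
have Hy1 : linf y1 by exists 1 => n; rewrite normr1.
have C0 : 0 <= C.
  have h1 := sn_ge0 (HT _ Hy1); have h2 := HN _ Hy1.
  have h3 : 1 <= supnorm y1 by have := sn_ub 0 Hy1; rewrite normr1.
  have h4 : 0 <= C * supnorm y1 by apply: le_trans h2.
  nra.
have b0 := beta_ge0 Hs.
apply/ler_addgt0Pr => e e0.
pose d := e / (beta s + 1).
have d0 : 0 < d by apply: divr_gt0 => //; lra.
pose D := C + d.
have D0 : 0 < D by rewrite /D; lra.
suff : beta (tmap Tt s) <= D * beta s.
  move=> h; apply: (le_trans h); rewrite /D mulrDl lerD2l; exact: small_eps.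
apply: beta_le => S [LS HSc HSn].
pose S' := fun y => D^-1 *: S (Tt y).
have AS' : Adm S'.
  split.
  - move=> a y z Hy Hz; rewrite /S' LT // (LS _ _ _ (HT _ Hy) (HT _ Hz)).
    by rewrite scalerDr !scalerA mulrC.
  - by move=> y Hy; apply: (closedZ c0_closed); apply: HSc; apply: HT.
  - move=> y Hy; apply: sn_le => k.
    have -> : S' y k = D^-1 * S (Tt y) k by [].
    rewrite normrM gtr0_norm ?invr_gt0 // ler_pdivrMl //.
    apply: (le_trans (sn_ub k (c0_linf (HSc _ (HT _ Hy))))).
    apply: (le_trans (HSn _ (HT _ Hy))); apply: (le_trans (HN _ Hy)).
    by apply: ler_wpM2r; [exact: sn_ge0 | rewrite /D lerDl ltW].
have -> : tmap S (tmap Tt s) = tscale D (tmap S' s).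
  rewrite /tmap /tscale -!map_comp; apply: eq_map => p /=.
  by rewrite /S' scalerA mulfV ?scale1r // gt_eqF.
case: TNa => _ _ _ Hsc; rewrite Hsc ?gtr0_norm //; last exact: inY_Adm.
by apply: ler_wpM2l; [exact: ltW | exact: beta_ge].
Qed.

Lemma tails s d : in_Y (@c0 R) s -> 0 < d -> exists N, forall M, (N <= M)%N ->
  in_Y (fun y => linf y /\ supnorm (y - PT M y) <= d) s.
Proof.
move=> + d0; elim: s => [|p s IH] /=; first by exists 0%N.
move=> [Hp Hs]; have [N1 H1] := c0_tail Hp d0; have [N2 H2] := IH Hs.
exists (maxn N1 N2) => M; rewrite geq_max => /andP[h1 h2].
by split; [split; [exact: c0_linf | exact: H1] | exact: H2].
Qed.

Lemma beta_restr s : in_Y (@c0 R) s -> beta s = alpha s.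
Proof.
move=> Hs; have Hs' := in_Y_sub c0_linf Hs.
apply: le_anti; apply/andP; split.
  by apply: beta_le => S AS; apply: alpha_Adm.
apply/ler_addgt0Pr => e e0.
pose K := \sum_(p <- s) `|p.2|.
have K0 : 0 <= K by apply: sumr_ge0.
pose d := e / (K + 1).
have d0 : 0 < d by apply: divr_gt0 => //; lra.
have [N HN] := tails Hs d0.
have HNc : in_Y (fun y => c0 y /\ supnorm (y - PT N y) <= d) s.
  apply: in_Y_sub (in_Y_and Hs (HN N (leqnn N))) => y [? [? ?]]; by split.
apply: (le_trans (alpha_approx c0_closed TNa SGa _ HNc)).
  by move=> y _; exact: PT_c0.
apply: lerD; first exact: beta_ge (Adm_PT N) Hs'.
exact: small_eps.
Qed.

Lemma beta_unique (gamma : T -> R) :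
  left_tensorial (@linf R) (@supnorm R) gamma ->
  (forall s, in_Y (@c0 R) s -> gamma s = alpha s) ->
  forall s, in_Y (@linf R) s -> gamma s = beta s.
Proof.
move=> [TNg SGg LTg] Hga s Hs.
apply: le_anti; apply/andP; split; last first.
  apply: beta_le => S [LS HSc HSn]; rewrite -Hga; last exact: inY_Adm.
  rewrite -[leRHS]mul1r; apply: LTg => //.
  - by move=> y /HSc /c0_linf.
  - by move=> y Hy; rewrite mul1r; apply: HSn.
apply/ler_addgt0Pr => e e0.
pose K := \sum_(p <- s) `|p.2|.
have K0 : 0 <= K by apply: sumr_ge0.
pose d := e / (K + 1).
have d0 : 0 < d by apply: divr_gt0 => //; lra.
pose ys := map fst s.
have Hys : forall y, y \in ys -> linf y by apply/in_Y_memP.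
have [F [_ HF]] := net d0 Hys (fun _ => True).
pose pr n := fun f => all (fun y => `|y n - y f| <= d) ys.
have hasF n : has (pr n) F.
  by have [f [fin Hf]] := HF n I; apply/hasP; exists f.
pose c n := find (pr n) F.
have c_lt n : (c n < size F)%N by rewrite -has_find.
have c_ok n : pr n (nth 0%N F (c n)) by apply: nth_find.
pose S := fun (y : nat -> R) j => if (j < size F)%N then y (nth 0%N F j) else 0.
pose J := fun (z : nat -> R) n => z (c n).
have AS : Adm S.
  split.
  - move=> a y z _ _; apply/funext => j.
    change (S (a *: y + z) j = a * S y j + S z j).
    by rewrite /S; case: ifP => _ //=; rewrite mulr0 addr0.
  - move=> y _; apply/cvgr0Pnorm_le => e' e'0; exists (size F) => // j /= Hj.
    by rewrite /S ltnNge Hj normr0 ltW.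
  - move=> y Hy; apply: sn_le => j; rewrite /S; case: ifP => _.
      exact: sn_ub.
    by rewrite normr0 sn_ge0.
have J_linf z : linf z -> linf (J z).
  by move=> [M HM]; exists M => n; apply: HM.
have SJ_linf y : linf y -> linf (J (S y)).
  by move=> Hy; apply: J_linf; apply: c0_linf; case: AS => _ H _; apply: H.
have Happ : in_Y (fun y => linf y /\ supnorm (y - J (S y)) <= d) s.
  apply: (in_Y_and (Q := fun y => supnorm (y - J (S y)) <= d) Hs).
  apply/in_Y_memP => y yin; apply: sn_le => n.
  change (`|y n - S y (c n)| <= d); rewrite /S c_lt.
  by have /allP := c_ok n; apply.
apply: (le_trans (alpha_approx linf_closed TNg SGg _ Happ)) => //.
apply: lerD; last exact: small_eps.
have -> : tmap (fun y => J (S y)) s = tmap J (tmap S s) by rewrite /tmap -map_comp.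
have HSs : in_Y (@linf R) (tmap S s).
  by apply: in_Y_sub c0_linf _; apply: inY_Adm.
apply: (le_trans (LTg J 1 J_linf _ _ _ HSs)).
- by [].
- by move=> z Hz; rewrite mul1r; apply: sn_le => n; apply: (sn_ub (c n) Hz).
rewrite mul1r Hga; last exact: inY_Adm.
exact: beta_ge.
Qed.

End Beta.
End Gen.

Theorem proposition1p3 (R : realType) (X : completeNormedModType R)
  (alpha : @pretensor R X -> R) :
  left_tensorial (@c0 R) (@supnorm R) alpha ->
  exists beta : @pretensor R X -> R,
    [/\ left_tensorial (@linf R) (@supnorm R) beta,
        (forall s, in_Y (@c0 R) s -> beta s = alpha s) &
        (forall gamma : @pretensor R X -> R,
            left_tensorial (@linf R) (@supnorm R) gamma ->
            (forall s, in_Y (@c0 R) s -> gamma s = alpha s) ->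
            forall s, in_Y (@linf R) s -> gamma s = beta s)].
Proof.
move=> LA; exists (beta alpha); split.
- split.
  + split.
    * by move=> s t Hs Ht; apply: beta_teq.
    * by move=> s Hs; apply: beta_zero.
    * by move=> s t Hs Ht; apply: beta_tri.
    * by move=> c s Hs; apply: beta_scale.
  + by move=> y x Hy; apply: beta_single.
  + by move=> Tt C HT LT HN s Hs; apply: beta_LT.
- by move=> s Hs; apply: beta_restr.
- by move=> gamma LG Hg s Hs; apply: beta_unique.
Qed.
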